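(* Let $S$ be the class of Schreier split epimorphisms in the category $\mathsf{Mon}$ of monoids. Then $\mathsf{Mon}$ is $S$-fibrewise algebraically cartesian closed (for every split epimorphism $h\colon E\to B$, $h^*\colon SPt_B(\mathsf{Mon})\to SPt_E(\mathsf{Mon})$ has a right adjoint) and $S$-algebraically coherent (for every homomorphism $h\colon E\to B$, $h^*\colon SPt_B(\mathsf{Mon})\to SPt_E(\mathsf{Mon})$ preserves jointly strongly epimorphic pairs).
   Context: Monoids are written additively. A point is a split epimorphism $f\colon A\to B$ with chosen section $s$ ($fs=1_B$); $Pt_B$ is the category of points over $B$; for $h\colon E\to B$, $h^*$ pulls points back along $h$. A split epimorphism $(A,B,f,s)$ of monoids is Schreier if each $a\in A$ can be written uniquely as $a=\alpha+sf(a)$ with $\alpha\in\mathrm{Ker}(f)$. $SPt_B(\mathsf{Mon})$ is the full subcategory of $Pt_B(\mathsf{Mon})$ of Schreier points. A pair of morphisms with common codomain is jointly strongly epimorphic if whenever both factor through a monomorphism $m$, $m$ is an isomorphism. *)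

(* Defs.v *)
From Stdlib Require Import ProofIrrelevance.

Set Implicit Arguments.

Record Monoid := {
  car :> Type;
  madd : car -> car -> car;
  mzero : car;
  maddA : forall x y z, madd x (madd y z) = madd (madd x y) z;
  madd0l : forall x, madd mzero x = x;
  madd0r : forall x, madd x mzero = x
}.
Arguments madd {m}.
Arguments mzero {m}.

Record Hom (A B : Monoid) := {
  hfun :> A -> B;
  hom_add : forall x y, hfun (madd x y) = madd (hfun x) (hfun y);
  hom_zero : hfun mzero = mzero
}.

Definition hom_id (A : Monoid) : Hom A A :=
  {| hfun := fun x => x; hom_add := fun _ _ => eq_refl; hom_zero := eq_refl |}.

Lemma comp_add (A B C : Monoid) (g : Hom B C) (f : Hom A B) x y :
  g (f (madd x y)) = madd (g (f x)) (g (f y)).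
Proof. rewrite (hom_add f), (hom_add g). reflexivity. Qed.
Lemma comp_zero (A B C : Monoid) (g : Hom B C) (f : Hom A B) :
  g (f mzero) = mzero.
Proof. rewrite (hom_zero f), (hom_zero g). reflexivity. Qed.

Definition hom_comp (A B C : Monoid) (g : Hom B C) (f : Hom A B) : Hom A C :=
  {| hfun := fun x => g (f x); hom_add := comp_add g f; hom_zero := comp_zero g f |}.

Record Point (B : Monoid) := {
  ptA : Monoid;
  ptf : Hom ptA B;
  pts : Hom B ptA;
  pt_sec : forall b, ptf (pts b) = b
}.

Definition schreier (B : Monoid) (P : Point B) : Prop :=
  forall a : ptA P,
    exists! alpha : ptA P, ptf P alpha = mzero /\ a = madd alpha (pts P (ptf P a)).

Record PtHom (B : Monoid) (X Y : Point B) := {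
  phom :> Hom (ptA X) (ptA Y);
  ph_f : forall a, ptf Y (phom a) = ptf X a;
  ph_s : forall b, phom (pts X b) = pts Y b
}.

Definition pt_eq (B : Monoid) (X Y : Point B) (u v : PtHom X Y) : Prop :=
  forall a, u a = v a.

Lemma ptid_f (B : Monoid) (X : Point B) a : ptf X (hom_id (ptA X) a) = ptf X a.
Proof. reflexivity. Qed.
Lemma ptid_s (B : Monoid) (X : Point B) b : hom_id (ptA X) (pts X b) = pts X b.
Proof. reflexivity. Qed.
Definition pt_id (B : Monoid) (X : Point B) : PtHom X X :=
  {| phom := hom_id (ptA X); ph_f := @ptid_f B X; ph_s := @ptid_s B X |}.

Lemma ptcomp_f (B : Monoid) (X Y Z : Point B) (v : PtHom Y Z) (u : PtHom X Y) a :
  ptf Z (hom_comp v u a) = ptf X a.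
Proof. simpl. rewrite (ph_f v), (ph_f u). reflexivity. Qed.
Lemma ptcomp_s (B : Monoid) (X Y Z : Point B) (v : PtHom Y Z) (u : PtHom X Y) b :
  hom_comp v u (pts X b) = pts Z b.
Proof. simpl. rewrite (ph_s u), (ph_s v). reflexivity. Qed.
Definition pt_comp (B : Monoid) (X Y Z : Point B) (v : PtHom Y Z) (u : PtHom X Y)
  : PtHom X Z :=
  {| phom := hom_comp v u; ph_f := ptcomp_f v u; ph_s := ptcomp_s v u |}.

Definition is_mono_S (B : Monoid) (M Z : Point B) (m : PtHom M Z) : Prop :=
  forall (W : Point B), schreier W ->
  forall u v : PtHom W M, pt_eq (pt_comp m u) (pt_comp m v) -> pt_eq u v.

Definition is_iso (B : Monoid) (M Z : Point B) (m : PtHom M Z) : Prop :=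
  exists n : PtHom Z M, pt_eq (pt_comp n m) (pt_id M) /\ pt_eq (pt_comp m n) (pt_id Z).

Definition jointly_strong_epi_S (B : Monoid) (X1 X2 Z : Point B)
  (f1 : PtHom X1 Z) (f2 : PtHom X2 Z) : Prop :=
  forall (M : Point B), schreier M ->
  forall (m : PtHom M Z), is_mono_S m ->
  forall (g1 : PtHom X1 M) (g2 : PtHom X2 M),
    pt_eq (pt_comp m g1) f1 -> pt_eq (pt_comp m g2) f2 -> is_iso m.

Section Pullback.
Variables (E B : Monoid) (h : Hom E B) (P : Point B).

Definition pb_car : Type :=
  { p : car E * car (ptA P) | h (fst p) = ptf P (snd p) }.

Lemma sig_ext (x y : pb_car) : proj1_sig x = proj1_sig y -> x = y.
Proof.
  destruct x as [x Hx], y as [y Hy]; simpl; intros ->.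
  f_equal; apply proof_irrelevance.
Qed.

Lemma pb_add_ok (x y : pb_car) :
  h (fst (madd (fst (proj1_sig x)) (fst (proj1_sig y)),
          madd (snd (proj1_sig x)) (snd (proj1_sig y))))
  = ptf P (snd (madd (fst (proj1_sig x)) (fst (proj1_sig y)),
          madd (snd (proj1_sig x)) (snd (proj1_sig y)))).
Proof.
  destruct x as [[e1 a1] H1], y as [[e2 a2] H2]; simpl in *.
  rewrite (hom_add h), (hom_add (ptf P)), H1, H2. reflexivity.
Qed.

Definition pb_add (x y : pb_car) : pb_car :=
  exist _ (madd (fst (proj1_sig x)) (fst (proj1_sig y)),
           madd (snd (proj1_sig x)) (snd (proj1_sig y))) (pb_add_ok x y).

Lemma pb_zero_ok : h (fst (@mzero E, @mzero (ptA P)))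
                   = ptf P (snd (@mzero E, @mzero (ptA P))).
Proof. simpl. rewrite (hom_zero h), (hom_zero (ptf P)). reflexivity. Qed.

Definition pb_zero : pb_car := exist _ (mzero, mzero) pb_zero_ok.

Lemma pb_addA x y z : pb_add x (pb_add y z) = pb_add (pb_add x y) z.
Proof. apply sig_ext; simpl. rewrite !maddA. reflexivity. Qed.
Lemma pb_add0l x : pb_add pb_zero x = x.
Proof. apply sig_ext; destruct x as [[e a] H]; simpl. rewrite !madd0l. reflexivity. Qed.
Lemma pb_add0r x : pb_add x pb_zero = x.
Proof. apply sig_ext; destruct x as [[e a] H]; simpl. rewrite !madd0r. reflexivity. Qed.

Definition pb_monoid : Monoid :=
  {| car := pb_car; madd := pb_add; mzero := pb_zero;
     maddA := pb_addA; madd0l := pb_add0l; madd0r := pb_add0r |}.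

Definition pb_proj : Hom pb_monoid E :=
  {| hfun := fun x : pb_monoid => fst (proj1_sig (x : pb_car));
     hom_add := fun _ _ => eq_refl; hom_zero := eq_refl |}.

Lemma pb_sec_ok (e : E) : h (fst (e, pts P (h e))) = ptf P (snd (e, pts P (h e))).
Proof. simpl. rewrite pt_sec. reflexivity. Qed.

Definition pb_sec_fun (e : E) : pb_car := exist _ (e, pts P (h e)) (pb_sec_ok e).

Lemma pb_sec_add x y : pb_sec_fun (madd x y) = pb_add (pb_sec_fun x) (pb_sec_fun y).
Proof. apply sig_ext; simpl. rewrite (hom_add h), (hom_add (pts P)). reflexivity. Qed.
Lemma pb_sec_zero : pb_sec_fun mzero = pb_zero.
Proof. apply sig_ext; simpl. rewrite (hom_zero h), (hom_zero (pts P)). reflexivity. Qed.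

Definition pb_sec : Hom E pb_monoid :=
  {| hfun := (pb_sec_fun : E -> pb_monoid); hom_add := pb_sec_add; hom_zero := pb_sec_zero |}.

Lemma pb_is_sec e : pb_proj (pb_sec e) = e.
Proof. reflexivity. Qed.

Definition pullback : Point E :=
  {| ptA := pb_monoid; ptf := pb_proj; pts := pb_sec; pt_sec := pb_is_sec |}.
End Pullback.

Section PullbackHom.
Variables (E B : Monoid) (h : Hom E B) (X Y : Point B) (g : PtHom X Y).

Lemma pbh_ok (x : pb_car h X) :
  h (fst (fst (proj1_sig x), g (snd (proj1_sig x))))
  = ptf Y (snd (fst (proj1_sig x), g (snd (proj1_sig x)))).
Proof. destruct x as [[e a] H]; simpl in *. rewrite (ph_f g). exact H. Qed.

Definition pbh_fun (x : pb_car h X) : pb_car h Y :=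
  exist _ (fst (proj1_sig x), g (snd (proj1_sig x))) (pbh_ok x).

Lemma pbh_add x y : pbh_fun (pb_add x y) = pb_add (pbh_fun x) (pbh_fun y).
Proof. apply sig_ext; simpl. rewrite (hom_add g). reflexivity. Qed.
Lemma pbh_zero : pbh_fun (pb_zero h X) = pb_zero h Y.
Proof. apply sig_ext; simpl. rewrite (hom_zero g). reflexivity. Qed.

Definition pbh_hom : Hom (ptA (pullback h X)) (ptA (pullback h Y)) :=
  {| hfun := (pbh_fun : pb_monoid h X -> pb_monoid h Y); hom_add := pbh_add; hom_zero := pbh_zero |}.

Lemma pbh_f a : ptf (pullback h Y) (pbh_hom a) = ptf (pullback h X) a.
Proof. reflexivity. Qed.
Lemma pbh_s e : pbh_hom (pts (pullback h X) e) = pts (pullback h Y) e.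
Proof. apply sig_ext; simpl. rewrite (ph_s g). reflexivity. Qed.

Definition pullback_hom : PtHom (pullback h X) (pullback h Y) :=
  {| phom := pbh_hom; ph_f := pbh_f; ph_s := pbh_s |}.
End PullbackHom.

Definition pullback_preserves_schreier (E B : Monoid) (h : Hom E B) : Prop :=
  forall P : Point B, schreier P -> schreier (pullback h P).

(** h^* : SPt_B -> SPt_E has a right adjoint, expressed by couniversal arrows:
    for every Schreier point Y over E there are a Schreier point R Y over B and
    a counit eps : h^*(R Y) -> Y such that every f : h^* X -> Y (X Schreier over B)
    factors as eps o h^*(g) for a unique g : X -> R Y. *)
Definition has_right_adjoint_S (E B : Monoid) (h : Hom E B) : Prop :=
  forall Y : Point E, schreier Y ->
  exists (R : Point B) (eps : PtHom (pullback h R) Y),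
    schreier R /\
    forall X : Point B, schreier X ->
    forall f : PtHom (pullback h X) Y,
      exists g : PtHom X R,
        pt_eq (pt_comp eps (pullback_hom h g)) f /\
        forall g' : PtHom X R,
          pt_eq (pt_comp eps (pullback_hom h g')) f -> pt_eq g' g.

Definition preserves_jse_S (E B : Monoid) (h : Hom E B) : Prop :=
  forall (X1 X2 Z : Point B), schreier X1 -> schreier X2 -> schreier Z ->
  forall (f1 : PtHom X1 Z) (f2 : PtHom X2 Z),
    jointly_strong_epi_S f1 f2 ->
    jointly_strong_epi_S (pullback_hom h f1) (pullback_hom h f2).

Definition split_epi (E B : Monoid) (h : Hom E B) : Prop :=
  exists s : Hom B E, forall b, h (s b) = b.

(* Main.v *)
Require Import Defs.
From Stdlib Require Import ProofIrrelevance FunctionalExtensionality ClassicalEpsilon.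
Set Implicit Arguments.

Section Kap.
Variables (B : Monoid) (P : Point B) (HP : schreier P).

Definition kap (a : ptA P) : ptA P :=
  proj1_sig (constructive_indefinite_description _ (HP a)).

Lemma kap_spec a :
  (ptf P (kap a) = mzero /\ a = madd (kap a) (pts P (ptf P a))) /\
  (forall y, ptf P y = mzero /\ a = madd y (pts P (ptf P a)) -> kap a = y).
Proof. unfold kap. destruct (constructive_indefinite_description _ (HP a)) as [x Hx]. exact Hx. Qed.

Lemma kap_ker a : ptf P (kap a) = mzero.
Proof. apply (kap_spec a). Qed.
Lemma kap_dec a : a = madd (kap a) (pts P (ptf P a)).
Proof. apply (kap_spec a). Qed.
Lemma kap_uniq a k b : ptf P k = mzero -> a = madd k (pts P b) -> kap a = k.
Proof.
  intros Hk Ha. assert (Hb : ptf P a = b).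
  { rewrite Ha, (hom_add (ptf P)), Hk, pt_sec, madd0l. reflexivity. }
  apply (kap_spec a). split; [exact Hk|]. rewrite Hb. exact Ha.
Qed.
Lemma kap_s b : kap (pts P b) = mzero.
Proof. apply kap_uniq with b. apply hom_zero. rewrite madd0l. reflexivity. Qed.
Lemma kap_ker_id k : ptf P k = mzero -> kap k = k.
Proof. intros Hk. apply kap_uniq with mzero; auto. rewrite (hom_zero (pts P)), madd0r. reflexivity. Qed.
Lemma kap_add_s w b : kap (madd w (pts P b)) = kap w.
Proof.
  apply kap_uniq with (madd (ptf P w) b). apply kap_ker.
  rewrite (hom_add (pts P)), maddA, <- kap_dec. reflexivity.
Qed.
Lemma kap_add u v : kap (madd u v) = madd (kap u) (kap (madd (pts P (ptf P u)) v)).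
Proof.
  apply kap_uniq with (madd (ptf P u) (ptf P v)).
  rewrite (hom_add (ptf P)), !kap_ker, madd0l. reflexivity.
  rewrite <- maddA.
  assert (E1 : ptf P (madd (pts P (ptf P u)) v) = madd (ptf P u) (ptf P v)).
  { rewrite (hom_add (ptf P)), pt_sec. reflexivity. }
  rewrite <- E1, <- kap_dec. rewrite maddA, <- kap_dec. reflexivity.
Qed.
Lemma kap_s_kap b v : kap (madd (pts P b) (kap v)) = kap (madd (pts P b) v).
Proof.
  rewrite (kap_dec v) at 2. rewrite maddA, kap_add_s. reflexivity.
Qed.
Lemma kap_act_add b x y : ptf P x = mzero ->
  kap (madd (pts P b) (madd x y)) = madd (kap (madd (pts P b) x)) (kap (madd (pts P b) y)).
Proof.
  intros Hx. rewrite maddA, kap_add. rewrite (hom_add (ptf P)), pt_sec, Hx, madd0r. reflexivity.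
Qed.
Lemma kap_zero : kap mzero = mzero.
Proof. apply kap_ker_id, hom_zero. Qed.
End Kap.

Lemma kap_hom (B : Monoid) (P Q : Point B) (HP : schreier P) (HQ : schreier Q)
  (u : PtHom P Q) a : u (kap HP a) = kap HQ (u a).
Proof.
  symmetry. apply kap_uniq with (ptf P a).
  rewrite ph_f. apply kap_ker.
  rewrite <- (ph_s u), <- (hom_add u), <- kap_dec. reflexivity.
Qed.

Lemma pk_ok (E B : Monoid) (h : Hom E B) (P : Point B) (HP : schreier P) (a : ptA P) :
  h (fst (@mzero E, kap HP a)) = ptf P (snd (@mzero E, kap HP a)).
Proof. simpl. rewrite (hom_zero h), kap_ker. reflexivity. Qed.

Definition pk (E B : Monoid) (h : Hom E B) (P : Point B) (HP : schreier P) (a : ptA P)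
  : pb_car h P := exist _ (mzero, kap HP a) (pk_ok h HP a).

Lemma pb_schreier (E B : Monoid) (h : Hom E B) (P : Point B) :
  schreier P -> schreier (pullback h P).
Proof.
  intros HP x. destruct x as [[e a] H]. simpl in H.
  exists (pk h HP a). split.
  - split; [reflexivity|]. apply sig_ext. simpl. rewrite madd0l, H, <- kap_dec. reflexivity.
  - intros [[e' k] Hk] [H1 H2]. simpl in H1, Hk. subst e'.
    apply (f_equal (@proj1_sig _ _)) in H2. simpl in H2. injection H2. intros H3 _.
    apply sig_ext. simpl. f_equal. apply kap_uniq with (h e).
    rewrite <- Hk. apply hom_zero. exact H3.
Qed.

Section RA.
Variables (E B : Monoid) (h : Hom E B) (Y : Point E) (HY : schreier Y).

Definition act (e : E) (y : ptA Y) : ptA Y := kap HY (madd (pts Y e) y).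

Definition phi_ok (phi : B -> ptA Y) : Prop :=
  (forall c, ptf Y (phi c) = mzero) /\
  (forall e c, phi (madd (h e) c) = act e (phi c)).

Definition R_car := { p : (B -> ptA Y) * car B | phi_ok (fst p) }.

Lemma R_ext (x y : R_car) :
  (forall c, fst (proj1_sig x) c = fst (proj1_sig y) c) ->
  snd (proj1_sig x) = snd (proj1_sig y) -> x = y.
Proof.
  destruct x as [[p b] Hx], y as [[q b'] Hy]; simpl; intros H1 H2.
  apply functional_extensionality in H1. subst. f_equal. apply proof_irrelevance.
Qed.

Lemma R_add_ok (x y : R_car) :
  phi_ok (fun c => madd (fst (proj1_sig x) c) (fst (proj1_sig y) (madd c (snd (proj1_sig x))))).
Proof.
  destruct x as [[p b] [Hp1 Hp2]], y as [[q b'] [Hq1 Hq2]]; simpl. split.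
  - intros c. rewrite (hom_add (ptf Y)), Hp1, Hq1, madd0l. reflexivity.
  - intros e c. rewrite Hp2, <- maddA, Hq2. unfold act. rewrite kap_act_add by apply Hp1. reflexivity.
Qed.

Definition R_add (x y : R_car) : R_car :=
  exist _ ((fun c => madd (fst (proj1_sig x) c) (fst (proj1_sig y) (madd c (snd (proj1_sig x))))),
           madd (snd (proj1_sig x)) (snd (proj1_sig y))) (R_add_ok x y).

Lemma R_zero_ok : phi_ok (fun _ => mzero).
Proof. split. intros; apply hom_zero. intros e c. unfold act. rewrite madd0r, kap_s. reflexivity. Qed.

Definition R_zero : R_car := exist _ ((fun _ => mzero), mzero) R_zero_ok.

Lemma R_addA x y z : R_add x (R_add y z) = R_add (R_add x y) z.
Proof. apply R_ext; simpl; intros; rewrite ?maddA; reflexivity. Qed.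
Lemma R_add0l x : R_add R_zero x = x.
Proof. apply R_ext; simpl; intros; rewrite ?madd0l, ?madd0r; reflexivity. Qed.
Lemma R_add0r x : R_add x R_zero = x.
Proof. apply R_ext; simpl; intros; rewrite ?madd0l, ?madd0r; reflexivity. Qed.

Definition R_monoid : Monoid :=
  {| car := R_car; madd := R_add; mzero := R_zero;
     maddA := R_addA; madd0l := R_add0l; madd0r := R_add0r |}.

Definition R_f : Hom R_monoid B :=
  {| hfun := fun x : R_monoid => snd (proj1_sig (x : R_car));
     hom_add := fun _ _ => eq_refl; hom_zero := eq_refl |}.

Definition R_s_fun (b : B) : R_car := exist _ ((fun _ => mzero), b) R_zero_ok.
Lemma R_s_add x y : R_s_fun (madd x y) = R_add (R_s_fun x) (R_s_fun y).
Proof. apply R_ext; simpl; intros; rewrite ?madd0l; reflexivity. Qed.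
Definition R_s : Hom B R_monoid :=
  {| hfun := (R_s_fun : B -> R_monoid); hom_add := R_s_add; hom_zero := eq_refl |}.

Definition RP : Point B :=
  {| ptA := R_monoid; ptf := R_f; pts := R_s; pt_sec := fun _ => eq_refl |}.

Lemma RP_schreier : schreier RP.
Proof.
  intros [[p b] Hp].
  exists (exist _ (p, mzero) Hp : R_car). split.
  - split; [reflexivity|]. apply R_ext; simpl; intros; rewrite ?madd0l, ?madd0r; reflexivity.
  - intros [[q b'] Hq] [H1 H2]. simpl in H1. subst b'.
    apply R_ext; simpl; [|reflexivity]. intros c.
    apply (f_equal (fun z : R_car => fst (proj1_sig z) c)) in H2. simpl in H2.
    rewrite H2, madd0r. reflexivity.
Qed.

Definition eps_fun (x : pb_car h RP) : ptA Y :=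
  madd (fst (proj1_sig (snd (proj1_sig x) : R_car)) mzero) (pts Y (fst (proj1_sig x))).

Lemma eps_add x y : eps_fun (pb_add x y) = madd (eps_fun x) (eps_fun y).
Proof.
  destruct x as [[e [[p b] [Hp1 Hp2]]] Hx], y as [[e' [[q b'] [Hq1 Hq2]]] Hy].
  unfold eps_fun; simpl in *. subst b.
  rewrite madd0l.
  assert (Hq := Hq2 e mzero). rewrite madd0r in Hq. rewrite Hq. unfold act.
  rewrite (hom_add (pts Y)).
  rewrite <- !maddA. f_equal. rewrite !maddA. f_equal.
  rewrite (kap_dec HY (madd (pts Y e) (q mzero))) at 2.
  rewrite (hom_add (ptf Y)), pt_sec, Hq1, madd0r. reflexivity.
Qed.

Lemma eps_zero : eps_fun (pb_zero h RP) = mzero.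
Proof. unfold eps_fun; simpl. rewrite (hom_zero (pts Y)), madd0l. reflexivity. Qed.

Definition eps_hom : Hom (ptA (pullback h RP)) (ptA Y) :=
  {| hfun := (eps_fun : pb_monoid h RP -> ptA Y); hom_add := eps_add; hom_zero := eps_zero |}.

Lemma eps_f a : ptf Y (eps_hom a) = ptf (pullback h RP) a.
Proof.
  destruct a as [[e [[p b] [Hp1 Hp2]]] H]. simpl. unfold eps_fun; simpl.
  rewrite (hom_add (ptf Y)), Hp1, pt_sec, madd0l. reflexivity.
Qed.
Lemma eps_s e : eps_hom (pts (pullback h RP) e) = pts Y e.
Proof. simpl. unfold eps_fun; simpl. apply madd0l. Qed.

Definition eps : PtHom (pullback h RP) Y :=
  {| phom := eps_hom; ph_f := eps_f; ph_s := eps_s |}.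

Section Univ.
Variables (X : Point B) (HX : schreier X) (F : PtHom (pullback h X) Y).

Definition phx (x : ptA X) (c : B) : ptA Y :=
  F (pk h HX (madd (pts X c) x) : pb_monoid h X).

Lemma F_pk_ker w : ptf Y (F (pk h HX w : pb_monoid h X)) = mzero.
Proof. rewrite ph_f. reflexivity. Qed.

Lemma pk_eq w1 w2 : kap HX w1 = kap HX w2 -> pk h HX w1 = pk h HX w2.
Proof. intros H. apply sig_ext. simpl. rewrite H. reflexivity. Qed.

Lemma phx_ok x : phi_ok (phx x).
Proof.
  split.
  - intros c. apply F_pk_ker.
  - intros e c. unfold phx, act.
    symmetry. apply kap_uniq with e. apply F_pk_ker.
    rewrite <- (ph_s F e), <- !(hom_add F). f_equal.
    apply sig_ext. simpl. f_equal. rewrite madd0l, madd0r. reflexivity.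
    rewrite (hom_add (pts X)), <- maddA, <- (kap_s_kap HX (h e) (madd (pts X c) x)).
    rewrite (kap_dec HX (madd (pts X (h e)) (kap HX (madd (pts X c) x)))) at 1.
    rewrite (hom_add (ptf X)), pt_sec, kap_ker, madd0r. reflexivity.
Qed.

Definition g_fun (x : ptA X) : R_car := exist _ (phx x, ptf X x) (phx_ok x).

Lemma g_add x y : g_fun (madd x y) = R_add (g_fun x) (g_fun y).
Proof.
  apply R_ext; simpl; [|apply hom_add].
  intros c. unfold phx. rewrite <- (hom_add F). f_equal.
  apply sig_ext; simpl. rewrite madd0l. f_equal.
  rewrite maddA, kap_add, (hom_add (ptf X)), pt_sec, (hom_add (pts X)). reflexivity.
Qed.

Lemma g_zero : g_fun mzero = R_zero.
Proof.
  apply R_ext; simpl; [|apply hom_zero].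
  intros c. unfold phx. rewrite <- (hom_zero F). f_equal.
  apply sig_ext; simpl. rewrite madd0r, kap_s. reflexivity.
Qed.

Definition g_hom : Hom (ptA X) (ptA RP) :=
  {| hfun := (g_fun : ptA X -> R_monoid); hom_add := g_add; hom_zero := g_zero |}.

Lemma g_f a : ptf RP (g_hom a) = ptf X a.
Proof. reflexivity. Qed.
Lemma g_s b : g_hom (pts X b) = pts RP b.
Proof.
  apply R_ext; simpl; [|apply pt_sec].
  intros c. unfold phx. rewrite <- (hom_zero F). f_equal.
  apply sig_ext; simpl. rewrite <- (hom_add (pts X)), kap_s. reflexivity.
Qed.

Definition gP : PtHom X RP := {| phom := g_hom; ph_f := g_f; ph_s := g_s |}.

Lemma g_factor : pt_eq (pt_comp eps (pullback_hom h gP)) F.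
Proof.
  intros [[e x] H]. simpl. unfold eps_fun; simpl. unfold phx.
  rewrite <- (ph_s F e), <- (hom_add F). f_equal.
  apply sig_ext; simpl in *. rewrite madd0l. f_equal.
  rewrite (hom_zero (pts X)), madd0l, H. symmetry. apply kap_dec.
Qed.

Variable t : Hom B E.
Hypothesis Ht : forall b, h (t b) = b.

Lemma tp_ok (x : ptA X) c :
  h (fst (t (madd c (ptf X x)), madd (pts X c) x)) = ptf X (snd (t (madd c (ptf X x)), madd (pts X c) x)).
Proof. simpl. rewrite Ht, (hom_add (ptf X)), pt_sec. reflexivity. Qed.

Definition tp x c : pb_car h X := exist _ _ (tp_ok x c).

Lemma factor_phi (G : PtHom X RP) :
  pt_eq (pt_comp eps (pullback_hom h G)) F ->
  forall x c, fst (proj1_sig (G x : R_car)) c = kap HY (F (tp x c : pb_monoid h X)).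
Proof.
  intros HG x c. rewrite <- (HG (tp x c)). simpl. unfold eps_fun. simpl.
  symmetry. apply kap_uniq with (t (madd c (ptf X x))).
  - destruct (proj2_sig (G x : R_car)) as [Hp1 _]. apply Hp1.
  - f_equal. rewrite (hom_add G), (ph_s G). simpl. rewrite !madd0l. reflexivity.
Qed.

Lemma g_unique (G : PtHom X RP) :
  pt_eq (pt_comp eps (pullback_hom h G)) F -> pt_eq G gP.
Proof.
  intros HG x. apply R_ext.
  - intros c. rewrite (factor_phi HG), (factor_phi g_factor). reflexivity.
  - change (ptf RP (G x) = ptf RP (gP x)). rewrite !ph_f. reflexivity.
Qed.
End Univ.
End RA.

Lemma part2 (E B : Monoid) (h : Hom E B) : split_epi h -> has_right_adjoint_S h.
Proof.
  intros [t Ht] Y HY.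
  exists (RP h HY), (eps h HY). split. apply RP_schreier.
  intros X HX F. exists (gP HY HX F). split. apply g_factor.
  intros g' Hg'. eapply g_unique; eauto.
Qed.

Lemma sub_ext (A : Type) (P : A -> Prop) (x y : {a | P a}) : proj1_sig x = proj1_sig y -> x = y.
Proof. destruct x, y; simpl; intros ->; f_equal; apply proof_irrelevance. Qed.

Section Bij.
Variables (B : Monoid) (M N : Point B) (m : PtHom M N).
Hypothesis inj : forall a b, m a = m b -> a = b.
Hypothesis surj : forall y, exists x, m x = y.

Definition inv_fun (y : ptA N) : ptA M := proj1_sig (constructive_indefinite_description _ (surj y)).
Lemma inv_spec y : m (inv_fun y) = y.
Proof. unfold inv_fun. destruct (constructive_indefinite_description _ (surj y)). assumption. Qed.
Lemma inv_add x y : inv_fun (madd x y) = madd (inv_fun x) (inv_fun y).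
Proof. apply inj. rewrite (hom_add m), !inv_spec. reflexivity. Qed.
Lemma inv_zero : inv_fun mzero = mzero.
Proof. apply inj. rewrite (hom_zero m), !inv_spec. reflexivity. Qed.
Definition inv_hom : Hom (ptA N) (ptA M) :=
  {| hfun := inv_fun; hom_add := inv_add; hom_zero := inv_zero |}.
Lemma inv_f a : ptf M (inv_hom a) = ptf N a.
Proof. simpl. rewrite <- (ph_f m), inv_spec. reflexivity. Qed.
Lemma inv_s b : inv_hom (pts N b) = pts M b.
Proof. apply inj. simpl. rewrite inv_spec, (ph_s m). reflexivity. Qed.
Definition inv_pt : PtHom N M := {| phom := inv_hom; ph_f := inv_f; ph_s := inv_s |}.
Lemma bij_iso : is_iso m.
Proof.
  exists inv_pt. split; intros a; simpl.
  - apply inj. apply inv_spec.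
  - apply inv_spec.
Qed.
End Bij.

(* Injectivity of monos between Schreier points via kernel pairs *)
Section KP.
Variables (B : Monoid) (M N : Point B) (HM : schreier M) (HN : schreier N) (m : PtHom M N).

Definition KP_car := { p : ptA M * ptA M | m (fst p) = m (snd p) }.
Lemma KP_add_ok (x y : KP_car) :
  m (fst (madd (fst (proj1_sig x)) (fst (proj1_sig y)), madd (snd (proj1_sig x)) (snd (proj1_sig y))))
  = m (snd (madd (fst (proj1_sig x)) (fst (proj1_sig y)), madd (snd (proj1_sig x)) (snd (proj1_sig y)))).
Proof. destruct x as [[a a'] H1], y as [[b b'] H2]; simpl in *. rewrite !(hom_add m), H1, H2. reflexivity. Qed.
Definition KP_add (x y : KP_car) : KP_car := exist _ _ (KP_add_ok x y).
Definition KP_zero : KP_car := exist _ (mzero, mzero) eq_refl.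
Lemma KP_addA x y z : KP_add x (KP_add y z) = KP_add (KP_add x y) z.
Proof. apply sub_ext; simpl. rewrite !maddA. reflexivity. Qed.
Lemma KP_add0l x : KP_add KP_zero x = x.
Proof. apply sub_ext; destruct x as [[a a'] H]; simpl. rewrite !madd0l. reflexivity. Qed.
Lemma KP_add0r x : KP_add x KP_zero = x.
Proof. apply sub_ext; destruct x as [[a a'] H]; simpl. rewrite !madd0r. reflexivity. Qed.
Definition KP_monoid : Monoid :=
  {| car := KP_car; madd := KP_add; mzero := KP_zero;
     maddA := KP_addA; madd0l := KP_add0l; madd0r := KP_add0r |}.

Lemma KP_f_add (x y : KP_monoid) :
  ptf M (fst (proj1_sig (madd x y : KP_car))) =
  madd (ptf M (fst (proj1_sig (x : KP_car)))) (ptf M (fst (proj1_sig (y : KP_car)))).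
Proof. simpl. apply hom_add. Qed.
Definition KP_f : Hom KP_monoid B :=
  {| hfun := fun x : KP_monoid => ptf M (fst (proj1_sig (x : KP_car)));
     hom_add := KP_f_add; hom_zero := hom_zero (ptf M) |}.
Definition KP_s_fun (b : B) : KP_car := exist _ (pts M b, pts M b) eq_refl.
Lemma KP_s_add x y : KP_s_fun (madd x y) = KP_add (KP_s_fun x) (KP_s_fun y).
Proof. apply sub_ext; simpl. rewrite (hom_add (pts M)). reflexivity. Qed.
Lemma KP_s_zero : KP_s_fun mzero = KP_zero.
Proof. apply sub_ext; simpl. rewrite (hom_zero (pts M)). reflexivity. Qed.
Definition KP_s : Hom B KP_monoid :=
  {| hfun := (KP_s_fun : B -> KP_monoid); hom_add := KP_s_add; hom_zero := KP_s_zero |}.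
Definition KPP : Point B :=
  {| ptA := KP_monoid; ptf := KP_f; pts := KP_s; pt_sec := pt_sec M |}.

Lemma KP_fs (x : KP_car) : ptf M (snd (proj1_sig x)) = ptf M (fst (proj1_sig x)).
Proof. destruct x as [[a a'] H]; simpl in *. rewrite <- (ph_f m a), <- (ph_f m a'), H. reflexivity. Qed.

Lemma KP_kap_ok (x : KP_car) :
  m (fst (kap HM (fst (proj1_sig x)), kap HM (snd (proj1_sig x))))
  = m (snd (kap HM (fst (proj1_sig x)), kap HM (snd (proj1_sig x)))).
Proof. destruct x as [[a a'] H]; simpl in *. rewrite !(kap_hom HM HN), H. reflexivity. Qed.

Lemma KP_schreier : schreier KPP.
Proof.
  intros x. exists (exist _ _ (KP_kap_ok x) : KP_car). split.
  - split. simpl. apply kap_ker.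
    apply sub_ext. simpl. pose proof (KP_fs x) as Hf.
    destruct x as [[a a'] H]; simpl in *. f_equal. apply kap_dec. rewrite <- Hf. apply kap_dec.
  - intros [[k k'] Hk] [H1 H2]. simpl in H1.
    apply (f_equal (@proj1_sig _ _)) in H2. simpl in H2.
    pose proof (KP_fs x) as Hf.
    destruct x as [[a a'] H]; simpl in *. injection H2; intros E2 E1.
    assert (Hk' : ptf M k' = mzero).
    { rewrite <- (ph_f m k'), <- Hk, (ph_f m). exact H1. }
    apply sub_ext; simpl. f_equal.
    + apply kap_uniq with (ptf M a); assumption.
    + apply kap_uniq with (ptf M a); assumption.
Qed.

Definition KP_p1 : PtHom KPP M.
Proof.
  refine (@Build_PtHom B KPP M {| hfun := fun x : ptA KPP => fst (proj1_sig (x : KP_car)); hom_add := fun _ _ => eq_refl; hom_zero := eq_refl |} _ _);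
  intros; reflexivity.
Defined.
Definition KP_p2 : PtHom KPP M.
Proof.
  refine (@Build_PtHom B KPP M {| hfun := fun x : ptA KPP => snd (proj1_sig (x : KP_car)); hom_add := fun _ _ => eq_refl; hom_zero := eq_refl |} _ _);
  intros; simpl; try reflexivity. apply KP_fs.
Defined.

Lemma mono_inj : is_mono_S m -> forall a a', m a = m a' -> a = a'.
Proof.
  intros Hm a a' H.
  assert (E := Hm KPP KP_schreier KP_p1 KP_p2).
  assert (Hc : pt_eq (pt_comp m KP_p1) (pt_comp m KP_p2)).
  { intros [[u u'] Hu]. simpl. exact Hu. }
  exact (E Hc (exist _ (a, a') H)).
Qed.
End KP.

Section JSE.
Variables (E B : Monoid) (h : Hom E B) (X1 X2 Z : Point B)
  (HX1 : schreier X1) (HX2 : schreier X2) (HZ : schreier Z)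
  (f1 : PtHom X1 Z) (f2 : PtHom X2 Z) (Hj : jointly_strong_epi_S f1 f2)
  (M : Point E) (HM : schreier M) (m : PtHom M (pullback h Z))
  (g1 : PtHom (pullback h X1) M) (g2 : PtHom (pullback h X2) M)
  (Hg1 : pt_eq (pt_comp m g1) (pullback_hom h f1))
  (Hg2 : pt_eq (pt_comp m g2) (pullback_hom h f2)).

Definition Img (k : ptA Z) : Prop :=
  exists mu : ptA M, proj1_sig (m mu : pb_car h Z) = (mzero, k).

Lemma Img_add k k' : Img k -> Img k' -> Img (madd k k').
Proof.
  intros [mu H] [mu' H']. exists (madd mu mu').
  rewrite (hom_add m). destruct (m mu) as [[a b] Ha], (m mu') as [[c d] Hc].
  simpl in *. injection H; injection H'; intros; subst. rewrite madd0l. reflexivity.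
Qed.
Lemma Img_zero : Img mzero.
Proof. exists mzero. rewrite (hom_zero m). reflexivity. Qed.

Definition Gp (z : ptA Z) : Prop := forall b, Img (kap HZ (madd (pts Z b) z)).

Lemma Gp0 : Gp mzero.
Proof. intros b. rewrite madd0r, kap_s. apply Img_zero. Qed.
Lemma Gpadd x y : Gp x -> Gp y -> Gp (madd x y).
Proof. intros Hx Hy b. rewrite maddA, kap_add. apply Img_add; auto. Qed.
Lemma Gps b' : Gp (pts Z b').
Proof. intros b. rewrite <- (hom_add (pts Z)), kap_s. apply Img_zero. Qed.
Lemma Gpkap z : Gp z -> Gp (kap HZ z).
Proof. intros Hz b. rewrite kap_s_kap. apply Hz. Qed.

Definition S_car := { z : ptA Z | Gp z }.
Definition S_add (x y : S_car) : S_car :=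
  exist _ _ (Gpadd (proj2_sig x) (proj2_sig y)).
Definition S_zero : S_car := exist _ _ Gp0.
Lemma S_addA x y z : S_add x (S_add y z) = S_add (S_add x y) z.
Proof. apply sub_ext; simpl. apply maddA. Qed.
Lemma S_add0l x : S_add S_zero x = x.
Proof. apply sub_ext; simpl. apply madd0l. Qed.
Lemma S_add0r x : S_add x S_zero = x.
Proof. apply sub_ext; simpl. apply madd0r. Qed.
Definition S_monoid : Monoid :=
  {| car := S_car; madd := S_add; mzero := S_zero;
     maddA := S_addA; madd0l := S_add0l; madd0r := S_add0r |}.
Lemma S_f_add (x y : S_monoid) :
  ptf Z (proj1_sig (madd x y : S_car)) = madd (ptf Z (proj1_sig (x : S_car))) (ptf Z (proj1_sig (y : S_car))).
Proof. simpl. apply hom_add. Qed.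
Definition S_f : Hom S_monoid B :=
  {| hfun := fun x : S_monoid => ptf Z (proj1_sig (x : S_car));
     hom_add := S_f_add; hom_zero := hom_zero (ptf Z) |}.
Definition S_s_fun (b : B) : S_car := exist _ _ (Gps b).
Lemma S_s_add x y : S_s_fun (madd x y) = S_add (S_s_fun x) (S_s_fun y).
Proof. apply sub_ext; simpl. apply hom_add. Qed.
Lemma S_s_zero : S_s_fun mzero = S_zero.
Proof. apply sub_ext; simpl. apply hom_zero. Qed.
Definition S_s : Hom B S_monoid :=
  {| hfun := (S_s_fun : B -> S_monoid); hom_add := S_s_add; hom_zero := S_s_zero |}.
Definition SP : Point B :=
  {| ptA := S_monoid; ptf := S_f; pts := S_s; pt_sec := pt_sec Z |}.

Lemma SP_schreier : schreier SP.
Proof.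
  intros [z Hz]. exists (exist _ _ (Gpkap Hz) : S_car). split.
  - split. simpl. apply kap_ker. apply sub_ext. simpl. apply kap_dec.
  - intros [k Hk] [H1 H2]. simpl in H1.
    apply (f_equal (@proj1_sig _ _)) in H2. simpl in H2.
    apply sub_ext; simpl. apply kap_uniq with (ptf Z z); assumption.
Qed.

Definition S_incl : PtHom SP Z.
Proof.
  refine (@Build_PtHom B SP Z {| hfun := fun x : ptA SP => proj1_sig (x : S_car);
     hom_add := fun _ _ => eq_refl; hom_zero := eq_refl |} _ _); intros; reflexivity.
Defined.

Lemma S_incl_mono : is_mono_S S_incl.
Proof. intros W HW u v H a. apply sub_ext. apply H. Qed.

Lemma Gp_f1 x : Gp (f1 x).
Proof.
  intros b. rewrite <- (ph_s f1), <- (hom_add f1), <- (kap_hom HX1 HZ).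
  exists (g1 (pk h HX1 (madd (pts X1 b) x))).
  pose proof (Hg1 (pk h HX1 (madd (pts X1 b) x))) as H.
  transitivity (proj1_sig (pullback_hom h f1 (pk h HX1 (madd (pts X1 b) x)) : pb_car h Z)).
  f_equal. exact H. reflexivity.
Qed.
Lemma Gp_f2 x : Gp (f2 x).
Proof.
  intros b. rewrite <- (ph_s f2), <- (hom_add f2), <- (kap_hom HX2 HZ).
  exists (g2 (pk h HX2 (madd (pts X2 b) x))).
  pose proof (Hg2 (pk h HX2 (madd (pts X2 b) x))) as H.
  transitivity (proj1_sig (pullback_hom h f2 (pk h HX2 (madd (pts X2 b) x)) : pb_car h Z)).
  f_equal. exact H. reflexivity.
Qed.

Definition g1S_fun (x : ptA X1) : S_car := exist _ _ (Gp_f1 x).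
Lemma g1S_add x y : g1S_fun (madd x y) = S_add (g1S_fun x) (g1S_fun y).
Proof. apply sub_ext; simpl. apply hom_add. Qed.
Lemma g1S_zero : g1S_fun mzero = S_zero.
Proof. apply sub_ext; simpl. apply hom_zero. Qed.
Definition g1S : PtHom X1 SP.
Proof.
  refine (@Build_PtHom B X1 SP {| hfun := (g1S_fun : ptA X1 -> S_monoid);
     hom_add := g1S_add; hom_zero := g1S_zero |} _ _); intros; simpl.
  apply ph_f. apply sub_ext; simpl. apply ph_s.
Defined.
Definition g2S_fun (x : ptA X2) : S_car := exist _ _ (Gp_f2 x).
Lemma g2S_add x y : g2S_fun (madd x y) = S_add (g2S_fun x) (g2S_fun y).
Proof. apply sub_ext; simpl. apply hom_add. Qed.
Lemma g2S_zero : g2S_fun mzero = S_zero.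
Proof. apply sub_ext; simpl. apply hom_zero. Qed.
Definition g2S : PtHom X2 SP.
Proof.
  refine (@Build_PtHom B X2 SP {| hfun := (g2S_fun : ptA X2 -> S_monoid);
     hom_add := g2S_add; hom_zero := g2S_zero |} _ _); intros; simpl.
  apply ph_f. apply sub_ext; simpl. apply ph_s.
Defined.

Lemma Gp_all z : Gp z.
Proof.
  destruct (@Hj SP SP_schreier S_incl S_incl_mono g1S g2S) as [n [_ Hn]].
  - intros a. reflexivity.
  - intros a. reflexivity.
  - specialize (Hn z). simpl in Hn. rewrite <- Hn. exact (proj2_sig (n z : S_car)).
Qed.

Lemma m_surj (y : ptA (pullback h Z)) : exists x, m x = y.
Proof.
  destruct y as [[e z] H]. simpl in H.
  destruct (Gp_all z mzero) as [mu Hmu].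
  rewrite (hom_zero (pts Z)), madd0l in Hmu.
  exists (madd mu (pts M e)).
  rewrite (hom_add m), (ph_s m). destruct (m mu) as [[a c] Ha]. simpl in Hmu.
  injection Hmu; intros; subst. apply sig_ext. simpl.
  rewrite madd0l, H, <- kap_dec. reflexivity.
Qed.

Lemma jse_main : is_mono_S m -> is_iso m.
Proof.
  intros Hm. apply bij_iso.
  - apply (mono_inj HM (pb_schreier HZ)). exact Hm.
  - apply m_surj.
Qed.
End JSE.

Lemma part3 (E B : Monoid) (h : Hom E B) : preserves_jse_S h.
Proof.
  intros X1 X2 Z HX1 HX2 HZ f1 f2 Hj M HM m Hm g1 g2 Hg1 Hg2.
  exact (jse_main HX1 HX2 HZ Hj HM Hg1 Hg2 Hm).
Qed.

Theorem mainTheorem8 :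
  (forall (E B : Monoid) (h : Hom E B), pullback_preserves_schreier h) /\
  (forall (E B : Monoid) (h : Hom E B), split_epi h -> has_right_adjoint_S h) /\
  (forall (E B : Monoid) (h : Hom E B), preserves_jse_S h).
Proof.
  split; [|split].
  - intros E B h P HP. exact (pb_schreier (h:=h) HP).
  - exact part2.
  - exact part3.
Qed.
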